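(* Let $R$ be a Bézout domain and let $A,B,C\in R^{n\times n}$ satisfy $ABA=ACA$. If $AB$ is Drazin invertible, then there exists $k\in\mathbb{N}$ such that $(AB)^s$ is similar to $(CA)^s$ for every integer $s\geq k$.
   Context: A Bézout domain is an integral domain in which every finitely generated ideal is principal. A matrix $M\in R^{n\times n}$ is Drazin invertible if there exists $X\in R^{n\times n}$ with $MX=XM$, $XMX=X$ and $M^{m+1}X=M^m$ for some nonnegative integer $m$; such $X$ is unique and denoted $M^D$. Two matrices $M,N\in R^{n\times n}$ are similar if $M=S^{-1}NS$ for some invertible $S\in R^{n\times n}$. *)

(* Defs.v *)
From HB Require Import structures.
From mathcomp Require Import all_boot all_order all_algebra.
Set Implicit Arguments. Unset Strict Implicit. Unset Printing Implicit Defensive.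
Import GRing.Theory.
Local Open Scope ring_scope.

Definition in_fg_ideal (R : comRingType) (s : seq R) (x : R) : Prop :=
  exists c : seq R, size c = size s /\ x = \sum_(i < size s) c`_i * s`_i.

Definition bezout_domain (R : idomainType) : Prop :=
  forall s : seq R, exists d : R,
    forall x : R, in_fg_ideal s x <-> exists r : R, x = r * d.

Definition drazin_inverse (R : comRingType) (n : nat) (M X : 'M[R]_n) : Prop :=
  [/\ M *m X = X *m M, X *m M *m X = X &
      exists m : nat, M ^+ m.+1 *m X = M ^+ m].

Definition drazin_invertible (R : comRingType) (n : nat) (M : 'M[R]_n) : Prop :=
  exists X : 'M[R]_n, drazin_inverse M X.

Definition similar_mx (R : comUnitRingType) (n : nat) (M N : 'M[R]_n) : Prop :=
  exists S : 'M[R]_n, S \in unitmx /\ M = invmx S *m N *m S.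

(* Main.v *)
Require Import Defs.
From mathcomp Require Import all_boot all_order all_algebra.
From mathcomp Require Import ring fraction.
Set Implicit Arguments. Unset Strict Implicit. Unset Printing Implicit Defensive.
Import GRing.Theory.
Local Open Scope ring_scope.


Section RowOp.
Variable R : comRingType.

Definition rowop m (i j : 'I_m) (p q r s : R) : 'M[R]_m :=
  \matrix_(k, l) (if k == i then (if l == i then p else if l == j then q else 0)
     else if k == j then (if l == i then r else if l == j then s else 0)
     else (k == l)%:R).

Lemma rowopE m n (i j : 'I_m) p q r s (B : 'M[R]_(m, n)) k l : i != j ->
  (rowop i j p q r s *m B) k l =
  if k == i then p * B i l + q * B j l
  else if k == j then r * B i l + s * B j l else B k l.
Proof.
move=> nij; rewrite mxE.
have two : forall (a b : R), \sum_t (if t == i then a else if t == j then b else 0) * B t l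
   = a * B i l + b * B j l.
  move=> a b; rewrite (bigD1 i) //= eqxx (bigD1 j) /=; last by rewrite eq_sym.
  rewrite eq_sym (negPf nij) eqxx big1 ?addr0 // => t /andP[ti tj].
  by rewrite (negPf ti) (negPf tj) mul0r.
case: eqVneq => [->|ki]; first by rewrite -two; apply: eq_bigr => t _; rewrite !mxE eqxx.
case: eqVneq => [->|kj].
  rewrite -two; apply: eq_bigr => t _; rewrite !mxE eqxx.
  by rewrite eq_sym (negPf nij).
rewrite (bigD1 k) //= !mxE (negPf ki) (negPf kj) eqxx mul1r big1 ?addr0 // => t tk.
by rewrite !mxE (negPf ki) (negPf kj) eq_sym (negPf tk) mul0r.
Qed.

Lemma rowop_mul m (i j : 'I_m) p q r s p' q' r' s' : i != j ->
  rowop i j p q r s *m rowop i j p' q' r' s' =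
  rowop i j (p * p' + q * r') (p * q' + q * s') (r * p' + s * r') (r * q' + s * s').
Proof.
move=> nij; apply/matrixP => k l; rewrite rowopE // !mxE !eqxx (eq_sym j i) (negPf nij).
case: (eqVneq k i) => [_|ki].
  case: (eqVneq l i) => [_|li]; first by ring.
  case: (eqVneq l j) => [_|lj]; first by ring.
  by ring.
case: (eqVneq k j) => [_|kj].
  case: (eqVneq l i) => [_|li]; first by ring.
  case: (eqVneq l j) => [_|lj]; first by ring.
  by ring.
by [].
Qed.

Lemma rowop1 m (i j : 'I_m) : i != j -> rowop i j 1 0 0 1 = 1%:M.
Proof.
move=> nij; apply/matrixP => k l; rewrite !mxE.
case: (eqVneq k i) => [E|ki].
  subst k; case: (eqVneq l i) => [_|li] //.
  by rewrite if_same.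
case: (eqVneq k j) => [E|kj] //.
subst k; case: (eqVneq l i) => [E|li].
  by subst l; rewrite eq_sym (negPf nij).
by case: (eqVneq l j) => [_|lj].
Qed.
End RowOp.


Section Bez.
Variable R : idomainType.
Hypothesis HR : bezout_domain R.

Lemma bez2 (a b : R) : exists d x y a' b' : R,
  [/\ a = a' * d, b = b' * d & d = x * a + y * b].
Proof.
have [d Hd] := HR [:: a; b].
have [c [_ edc]] : in_fg_ideal [:: a; b] d by apply/Hd; exists 1; rewrite mul1r.
have [a' ea] : exists r, a = r * d.
  by apply/Hd; exists [:: 1; 0]; split => //; rewrite !big_ord_recl big_ord0 /=; ring.
have [b' eb] : exists r, b = r * d.
  by apply/Hd; exists [:: 0; 1]; split => //; rewrite !big_ord_recl big_ord0 /=; ring.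
exists d, c`_0, c`_1, a', b'.
by split => //; rewrite edc !big_ord_recl big_ord0 /= addr0.
Qed.

Lemma col_step m (c : 'cV[R]_m) (i j : 'I_m) : i != j ->
  exists U : 'M_m, [/\ U \in unitmx, (U *m c) j 0 = 0 &
    forall k, k != i -> k != j -> (U *m c) k 0 = c k 0].
Proof.
move=> nij.
have [d [x [y [a' [b' [ea eb ed]]]]]] := bez2 (c i 0) (c j 0).
have [d0|dn0] := eqVneq d 0.
  exists 1%:M; rewrite unitmx1 mul1mx; split => //.
  by rewrite eb d0 mulr0.
have e1 : x * a' + y * b' = 1.
  apply: (mulIf dn0); rewrite mul1r.
  by rewrite {2}ed ea eb; ring.
exists (rowop i j x y (- b') a'); split.
- suff : rowop i j x y (- b') a' *m rowop i j a' (- y) b' x = 1%:M by case/mulmx1_unit.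
  rewrite rowop_mul //.
  have -> : x * - y + y * x = 0 by ring.
  have -> : - b' * a' + a' * b' = 0 by ring.
  have -> : - b' * - y + a' * x = 1 by rewrite -e1; ring.
  by rewrite e1 rowop1.
- rewrite rowopE // (eq_sym j i) (negPf nij) eqxx ea eb; ring.
- by move=> k ki kj; rewrite rowopE // (negPf ki) (negPf kj).
Qed.

Lemma col_reduce m (c : 'cV[R]_m.+1) :
  exists U : 'M_m.+1, U \in unitmx /\ forall k, k != 0 -> (U *m c) k 0 = 0.
Proof.
suff H : forall t, exists U : 'M_m.+1, U \in unitmx /\
    forall k : 'I_m.+1, k != 0 -> (k < t)%N -> (U *m c) k 0 = 0.
  by have [U [uU HU]] := H m.+1; exists U; split => // k k0; apply: HU.
elim => [|t [U [uU HU]]].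
  by exists 1%:M; split => //; rewrite unitmx1.
have [tm|tm] := ltnP t m.+1; last first.
  exists U; split => // k k0 kt; apply: HU => //.
  by apply: leq_trans (ltn_ord k) tm.
have [t0|tn0] := eqVneq t 0%N.
  by exists U; split => // k k0; rewrite t0 ltnS leqn0 => /eqP k0'; case/eqP: k0; apply: val_inj.
set j := Ordinal tm.
have j0 : (0 : 'I_m.+1) != j by rewrite -val_eqE /= eq_sym.
have [U' [uU' HU'1 HU'2]] := col_step (U *m c) j0.
exists (U' *m U); split; first by rewrite unitmx_mul uU' uU.
move=> k k0; rewrite ltnS leq_eqVlt => /orP[/eqP kt|kt].
  have -> : k = j by apply: val_inj.
  by rewrite -mulmxA.
rewrite -mulmxA HU'2 ?HU //.
by rewrite -val_eqE /= neq_ltn kt.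
Qed.
End Bez.


Lemma pid_block1 (R : ringType) m n r :
  pid_mx (1 + r) = block_mx 1%:M 0 0 (pid_mx r) :> 'M[R]_(1 + m, 1 + n).
Proof.
apply/matrixP=> i j; rewrite !mxE.
do ![case: split_ordP => ? -> /[!mxE]//]; rewrite ?ord1 //=.
Qed.

Section Herm.
Variable R : idomainType.
Hypothesis HR : bezout_domain R.

Definition herm_prop m n (E : 'M[R]_(m, n)) := exists U : 'M_m, exists r : nat,
  [/\ U \in unitmx, (r <= m)%N, pid_mx r *m (U *m E) = U *m E &
   forall p (Z : 'M_(p, m)), Z *m pid_mx r *m (U *m E) = 0 -> Z *m (pid_mx r : 'M_m) = 0].

Lemma hermite_step m n (IH : forall m (E : 'M[R]_(m, n)), herm_prop E)
  (E : 'M[R]_(1 + m, 1 + n)) : herm_prop E.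
Proof.
pose c := lsubmx E.
pose E1 := rsubmx E.
have EE : E = row_mx c E1 by rewrite hsubmxK.
have [c0|cn0] := eqVneq c 0.
  have [U [r [uU rm H1 H2]]] := IH _ E1.
  exists U, r; split => //.
  - by rewrite EE c0 !mul_mx_row !mulmx0 H1.
  - move=> p Z; rewrite EE c0 !mul_mx_row !mulmx0 -row_mx0.
    by case/eq_row_mx => _ /H2.
have [U0 [uU0 HU0]] := col_reduce HR c.
pose d := (U0 *m c) 0 0.
have dn0 : d != 0.
  apply: contra cn0 => /eqP d0; apply/eqP.
  have : U0 *m c = 0.
    apply/matrixP => i j; rewrite ord1 [X in _ = X]mxE.
    by have [->|i0] := eqVneq i 0; [exact: d0 | exact: HU0].
  by move=> /(congr1 (mulmx (invmx U0))); rewrite mulKmx // mulmx0.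
pose U0' : 'M_(1 + m) := U0.
pose G : 'M_(1 + m, 1 + n) := U0' *m E.
have GE : G = block_mx (ulsubmx G) (ursubmx G) 0 (drsubmx G).
  rewrite -{1}[G]submxK; congr block_mx.
  apply/matrixP => i j; rewrite ord1 [X in _ = X]mxE.
  have h : rshift 1 i != 0 :> 'I_(1 + m) by rewrite -val_eqE.
  by rewrite -(HU0 _ h) !mxE; apply: eq_bigr => k _; rewrite !mxE.
have [U2 [r2 [uU2 r2m H1 H2]]] := IH _ (drsubmx G).
exists (block_mx 1%:M 0 0 U2 *m U0'), (1 + r2)%N.
have UE : block_mx 1%:M 0 0 U2 *m U0' *m E =
    block_mx (ulsubmx G) (ursubmx G) 0 (U2 *m drsubmx G).
  rewrite -mulmxA; have -> : U0' *m E = G by [].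
  by rewrite {1}GE mulmx_block !mul1mx !mul0mx !mulmx0 !addr0 !add0r.
have g11 : ulsubmx G 0 0 = d.
  rewrite !mxE /d mxE; apply: eq_bigr => k _; rewrite !mxE.
  by congr (_ * _); congr (U0 _ _); apply: val_inj.
split.
- by rewrite unitmx_mul uU0 andbT unitmxE det_ublock det1 mul1r -unitmxE.
- by rewrite leq_add2l.
- rewrite UE pid_block1 mulmx_block !mul1mx !mul0mx !mulmx0 !addr0 !add0r.
  by rewrite H1.
- move=> p Z; rewrite UE pid_block1 -[Z]hsubmxK !mul_row_block.
  rewrite !mulmx0 !mulmx1 !addr0 !add0r -row_mx0 => /eq_row_mx [h1 h2].
  have Zl0 : lsubmx Z = 0.
    apply/matrixP => i j; rewrite ord1 [X in _ = X]mxE.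
    move/(congr1 (fun M : 'M[R]_(p, 1) => M i 0)): h1.
    rewrite mxE big_ord1 g11 [X in _ = X -> _]mxE => /eqP.
    by rewrite mulf_eq0 (negPf dn0) orbF => /eqP.
  move: h2; rewrite Zl0 mul0mx add0r => h3.
  by rewrite (H2 _ _ h3) row_mx0.
Qed.

Lemma hermite n : forall m (E : 'M[R]_(m, n)), herm_prop E.
Proof.
elim: n => [|n IH] m E.
  exists 1%:M, 0%N; rewrite unitmx1 pid_mx_0; split => //.
  - by rewrite mul0mx [RHS]thinmx0.
  - by move=> p Z _; rewrite mulmx0.
case: m E => [|m] E.
  exists 1%:M, 0%N; rewrite unitmx1 pid_mx_0; split => //.
  - by rewrite mul0mx [RHS]flatmx0.
  - by move=> p Z _; rewrite mulmx0.
exact: (hermite_step IH E).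
Qed.
End Herm.


Section Idem.
Variable R : idomainType.
Hypothesis HR : bezout_domain R.

Lemma idem_sim n (E : 'M[R]_n) : E *m E = E ->
  exists V : 'M_n, exists r, [/\ V \in unitmx, (r <= n)%N & E = invmx V *m pid_mx r *m V].
Proof.
move=> EE.
have [U [r [uU rn H1 H2]]] := hermite HR E.
pose G := U *m E; pose T := invmx U; pose P : 'M[R]_n := pid_mx r.
have GE : G *m E = G by rewrite /G -mulmxA EE.
have ETG : E = T *m G by rewrite /G /T mulmxA mulVmx // mul1mx.
have GTG : G *m T *m G = G by rewrite -mulmxA -ETG GE.
have pp : P *m P = P by rewrite /P pid_mx_id.
have H1' : P *m G = G by exact: H1.
pose K := G *m T.
have Kp : K *m P = P.
  have Z0 : (K *m P - P) *m P *m G = 0.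
    rewrite -mulmxA H1' mulmxBl -mulmxA H1' /K GTG.
    by rewrite subrr.
  have := H2 _ _ Z0; rewrite mulmxBl -mulmxA pp.
  by move/eqP; rewrite subr_eq0 => /eqP.
have pK : P *m K = K by rewrite /K mulmxA H1'.
have KK : K *m K = K by rewrite /K mulmxA GTG.
pose N := K - P.
have N2 : N *m N = 0.
  by rewrite /N mulmxBl !mulmxBr KK Kp pK pp subrr.
have pN : P *m N = N by rewrite /N mulmxBr pK pp.
have Np : N *m P = 0 by rewrite /N mulmxBl Kp pp subrr.
have KN : K = (1%:M - N) *m P *m (1%:M + N).
  rewrite mulmxBl mul1mx Np subr0 mulmxDr mulmx1 pN /N.
  by rewrite addrC subrK.
pose V := (1%:M + N) *m U.
have VW : V *m (T *m (1%:M - N)) = 1%:M.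
  rewrite /V /T -mulmxA (mulmxA U) mulmxV // mul1mx.
  by rewrite mulmxBr mulmx1 mulmxDl mul1mx N2 addr0 addrK.
have [uV _] := mulmx1_unit VW.
have iV : invmx V = T *m (1%:M - N).
  by rewrite -[RHS](mulKmx uV) VW mulmx1.
exists V, r; split => //.
rewrite iV /V.
have GKU : G = K *m U by rewrite /K -mulmxA mulVmx // mulmx1.
rewrite ETG GKU KN !mulmxA.
done.
Qed.
End Idem.


Section Equiv.
Variable R : idomainType.
Hypothesis HR : bezout_domain R.
Local Notation F := {fraction R}.
Local Notation fm := (map_mx (@tofrac R)).

Lemma rank_sim n (E V : 'M[R]_n) r : V \in unitmx -> (r <= n)%N ->
  E = invmx V *m pid_mx r *m V -> \rank (fm E) = r.
Proof.
move=> uV rn EV.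
have pE : pid_mx r = V *m E *m invmx V.
  by rewrite EV !mulmxA mulmxV // mul1mx -mulmxA mulmxV // mulmx1.
apply/eqP; rewrite eqn_leq; apply/andP; split.
  rewrite EV !map_mxM map_pid_mx.
  apply: leq_trans (mxrankM_maxl _ _) _.
  apply: leq_trans (mxrankM_maxr _ _) _.
  by rewrite rank_pid_mx.
have rp : \rank (pid_mx r : 'M[F]_n) = r by rewrite rank_pid_mx.
rewrite -{1}rp -(map_pid_mx (@tofrac R)) pE.
rewrite !map_mxM.
apply: leq_trans (mxrankM_maxl _ _) _.
exact: mxrankM_maxr.
Qed.

Lemma idem_equiv n (P Q U V : 'M[R]_n) : P *m P = P -> Q *m Q = Q ->
  U *m V = P -> V *m U = Q ->
  exists W W' : 'M[R]_n, W *m W' = 1%:M - P /\ W' *m W = 1%:M - Q.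
Proof.
move=> PP QQ UV VU.
have [VP [rP [uP rPn EP]]] := idem_sim HR PP.
have [VQ [rQ [uQ rQn EQ]]] := idem_sim HR QQ.
have le1 : (\rank (fm P) <= \rank (fm Q))%N.
  have -> : P = U *m Q *m V by rewrite -VU !mulmxA UV -mulmxA UV PP.
  rewrite !map_mxM; apply: leq_trans (mxrankM_maxl _ _) _; exact: mxrankM_maxr.
have le2 : (\rank (fm Q) <= \rank (fm P))%N.
  have -> : Q = V *m P *m U by rewrite -UV !mulmxA VU -mulmxA VU QQ.
  rewrite !map_mxM; apply: leq_trans (mxrankM_maxl _ _) _; exact: mxrankM_maxr.
have erq : rP = rQ.
  rewrite -(rank_sim uP rPn EP) -(rank_sim uQ rQn EQ).
  by apply/eqP; rewrite eqn_leq le1 le2.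
subst rQ.
pose c : 'M[R]_n := 1%:M - pid_mx rP.
have cc : c *m c = c.
  by rewrite /c mulmxBl !mulmxBr !mul1mx mulmx1 pid_mx_id // subrr subr0.
exists (invmx VP *m c *m VQ), (invmx VQ *m c *m VP); split.
- rewrite !mulmxA -(mulmxA _ VQ) mulmxV // mulmx1 -(mulmxA _ c c) cc.
  by rewrite /c mulmxBr mulmx1 mulmxBl mulVmx // -EP.
- rewrite !mulmxA -(mulmxA _ VP) mulmxV // mulmx1 -(mulmxA _ c c) cc.
  by rewrite /c mulmxBr mulmx1 mulmxBl mulVmx // -EQ.
Qed.
End Equiv.


Lemma intertw (T : pzRingType) (x a y : T) k : x * a = a * y -> x ^+ k * a = a * y ^+ k.
Proof.
move=> h; elim: k => [|k IH]; first by rewrite !expr0 mul1r mulr1.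
by rewrite exprS -mulrA IH mulrA h -mulrA -exprS.
Qed.

Unset Implicit Arguments.
Theorem theorem3p4 (R : idomainType) (HR : bezout_domain R) (n : nat)
  (A B C : 'M[R]_n) :
  A *m B *m A = A *m C *m A ->
  drazin_invertible (A *m B) ->
  exists k : nat, forall s : nat, (k <= s)%N ->
    similar_mx ((A *m B) ^+ s) ((C *m A) ^+ s).
Proof.
rewrite /drazin_invertible /drazin_inverse /similar_mx !mulmxE.
move=> hABC [X [MX XMX [m Hm]]].
pose M := A * B; pose N := C * A.
have F1 : M * (X * X) = X by rewrite mulrA MX XMX.
pose P := M * X.
have PP : P * P = P by rewrite /P -mulrA (mulrA X) XMX.
have F2 : A * C * X = P.
  rewrite -{1}F1 /M !mulrA -hABC.
  by rewrite /P -[in RHS]F1 /M !mulrA.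
pose V := C * X.
have AV : A * V = P by rewrite /V mulrA F2.
pose Q := V * A.
have XP : X * P = X by rewrite /P mulrA XMX.
have VP : V * P = V by rewrite /V -mulrA XP.
have QQ : Q * Q = Q by rewrite /Q mulrA -(mulrA V A V) AV VP.
have QV : Q * V = V by rewrite /Q -mulrA AV VP.
have AQ : A * Q = P * A by rewrite /Q mulrA AV.
have MA : M * A = A * N by rewrite /M /N mulrA hABC.
have VM : V * M = C * P by rewrite /V /P -mulrA -MX.
have QN : Q * N = N * Q.
  have -> : Q * N = V * (A * C * A) by rewrite /Q /N !mulrA.
  rewrite -hABC.
  have -> : V * (A * B * A) = V * M * A by rewrite /M !mulrA.
  have -> : N * Q = C * (A * V) * A by rewrite /N /Q !mulrA.
  by rewrite VM AV.
have MsA : forall k, M ^+ k * A = A * N ^+ k by move=> k; apply: intertw.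
have MsP : forall s, (m <= s)%N -> M ^+ s * P = M ^+ s.
  move=> s /subnK <-.
  by rewrite /P mulrA -exprSr -addnS exprD -mulrA Hm -exprD.
have NsF : forall j, N ^+ j.+2 = C * M ^+ j.+1 * A.
  move=> j.
  have -> : N ^+ j.+2 = C * (A * N ^+ j) * C * A by rewrite exprS exprSr /N !mulrA.
  rewrite -MsA.
  have -> : C * (M ^+ j * A) * C * A = C * M ^+ j * (A * C * A) by rewrite !mulrA.
  by rewrite -hABC exprSr /M !mulrA.
have NsQ : forall s, (m.+2 <= s)%N -> N ^+ s * Q = N ^+ s.
  move=> s hs.
  have es : s = (s - 2).+2 by rewrite -addn2 subnK // (leq_trans _ hs).
  rewrite es NsF -mulrA AQ mulrA -(mulrA C) MsP //.
  by rewrite -ltnS -es (leq_trans _ hs).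
have [W0 [W0' [h1 h2]]] := idem_equiv HR (P := P) (Q := Q) (U := A) (V := V) PP QQ AV erefl.
rewrite mulmxE idmxE in h1 h2.
pose W := (1 - P) * W0 * (1 - Q).
pose W' := (1 - Q) * W0' * (1 - P).
pose S := A * Q + W.
pose S' := V + W'.
have Q1Q : Q * (1 - Q) = 0 by rewrite mulrBr mulr1 QQ subrr.
have Q1V : (1 - Q) * V = 0 by rewrite mulrBl mul1r QV subrr.
have QQ' : (1 - Q) * (1 - Q) = 1 - Q by rewrite mulrBr mulr1 mulrBl mul1r QQ subrr subr0.
have PP' : (1 - P) * (1 - P) = 1 - P by rewrite mulrBr mulr1 mulrBl mul1r PP subrr subr0.
have W0Q : W0 * (1 - Q) = (1 - P) * W0 by rewrite -h1 -h2 mulrA.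
have SS' : S * S' = 1.
  rewrite /S /S' mulrDl !mulrDr.
  have -> : A * Q * V = P by rewrite -mulrA QV AV.
  have -> : A * Q * W' = 0.
    rewrite /W' (mulrA (A * Q) ((1 - Q) * W0')) (mulrA (A * Q) (1 - Q)) -(mulrA A Q (1 - Q)).
    by rewrite Q1Q mulr0 !mul0r.
  have -> : W * V = 0 by rewrite /W -mulrA Q1V mulr0.
  have -> : W * W' = 1 - P.
    rewrite /W /W' !mulrA -(mulrA _ (1 - Q) (1 - Q)) QQ' -(mulrA (1 - P) W0 (1 - Q)) W0Q.
    rewrite mulrA PP' -(mulrA (1 - P) W0 W0') h1 PP' PP'.
    done.
  by rewrite !addr0 add0r addrCA subrr addr0.
exists m.+2 => s hs.
have MsS : M ^+ s * S = S * N ^+ s.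
  rewrite /S mulrDl mulrDr mulrA MsA -mulrA NsQ //.
  have -> : M ^+ s * W = 0.
    have e : M ^+ s * (1 - P) = 0.
      rewrite mulrBr mulr1 MsP ?subrr //.
      exact: leq_trans (leqnSn _) (leq_trans (leqnSn _) hs).
    by rewrite /W !mulrA e !mul0r.
  have -> : W * N ^+ s = 0.
    have e2 : (1 - Q) * N ^+ s = 0.
      by rewrite mulrBl mul1r (commrX s QN) NsQ // subrr.
    by rewrite /W -mulrA e2 mulr0.
  by rewrite !addr0 -mulrA (commrX s QN) NsQ.
have SS'mx : S *m S' = 1%:M by rewrite mulmxE idmxE.
have [uS uS'] := mulmx1_unit SS'mx.
exists S'; split => //.
have -> : invmx S' = S by rewrite -[S](mulmxK uS') SS'mx mul1mx.
rewrite -MsS -mulrA SS' mulr1.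
done.
Qed.
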